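(* Let $\Pi$ be a $2$-dimensional toral sub-manifold confined to a plane, parametrised as $\Pi=\{u\xi+v\eta:(u,v)\in[0,A]\times[0,B]\}$. Then $$\iint_{\Pi^2}\left(r^2+\frac{D\Omega D^T}{m}+\frac{\mathrm{tr}(H\Omega H\Omega)}{m^2}\right)dp\,dp'\ll_\Pi\frac1N+\frac{\mathcal{G}}{N^2},$$ where $$\mathcal{G}=\sum_{\substack{\lambda,\lambda'\in\Lambda_m\\ \lambda\neq\lambda'}}\left|\int_0^A\int_0^B e^{2\pi i\langle\lambda-\lambda',u\xi+v\eta\rangle}du\,dv\right|^2.$$
   Context: For a positive integer $m$ let $\Lambda=\Lambda_m=\{\lambda\in\mathbb{Z}^3:\|\lambda\|^2=m\}$ and $N=|\Lambda_m|$; $m$ ranges over integers with $m\not\equiv 0,4,7\pmod 8$ and bounds refer to $m\to\infty$. Let $\vec n=(n_1,n_2,n_3)$ be the unit normal to the plane containing $\Pi\subset\mathbb{T}^3=\mathbb{R}^3/\mathbb{Z}^3$, $\{\vec n,\xi,\eta\}$ an orthonormal basis of $\mathbb{R}^3$, and $\Pi$ parametrised by $\gamma:[0,A]\times[0,B]\to\Pi$, $(u,v)\mapsto u\xi+v\eta$, where $A=\max\{u:u\xi+v\eta\in\Pi\}$, $B=\max\{v:u\xi+v\eta\in\Pi\}$. For $p=u\xi+v\eta$, $p'=u'\xi+v'\eta$: $r(p,p')=\frac1N\sum_{\lambda\in\Lambda}e^{2\pi i\langle\lambda,(u'-u)\xi+(v'-v)\eta\rangle}$; $D(p,p')=\frac{2\pi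 i}{N}\sum_{\lambda}e^{2\pi i\langle\lambda,(u'-u)\xi+(v'-v)\eta\rangle}\lambda$ (row vector); $H(p,p')=-\frac{4\pi^2}{N}\sum_{\lambda}e^{2\pi i\langle\lambda,(u'-u)\xi+(v'-v)\eta\rangle}\lambda^T\lambda$; $\Omega=\begin{pmatrix}n_2^2+n_3^2&-n_1n_2&-n_1n_3\\-n_1n_2&n_1^2+n_3^2&-n_2n_3\\-n_1n_3&-n_2n_3&n_1^2+n_2^2\end{pmatrix}$. Integration over $\Pi^2$ is with respect to surface area measure. *)

(* Defs.v *)
From Stdlib Require Import Reals ZArith List.
From Coquelicot Require Import Coquelicot.
Import ListNotations.
Open Scope R_scope.

Definition vec3 : Type := (R * R * R)%type.
Definition zvec3 : Type := (Z * Z * Z)%type.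

Definition comp3 (v : vec3) (i : nat) : R :=
  match i with 0%nat => fst (fst v) | 1%nat => snd (fst v) | _ => snd v end.

Definition dot3 (x y : vec3) : R :=
  comp3 x 0 * comp3 y 0 + comp3 x 1 * comp3 y 1 + comp3 x 2 * comp3 y 2.

Definition vadd3 (x y : vec3) : vec3 :=
  (comp3 x 0 + comp3 y 0, comp3 x 1 + comp3 y 1, comp3 x 2 + comp3 y 2).
Definition vscale3 (a : R) (x : vec3) : vec3 :=
  (a * comp3 x 0, a * comp3 x 1, a * comp3 x 2).

Definition zvecR (l : zvec3) : vec3 :=
  (IZR (fst (fst l)), IZR (snd (fst l)), IZR (snd l)).

Definition zsub3 (l l' : zvec3) : zvec3 :=
  ((fst (fst l) - fst (fst l'))%Z, (snd (fst l) - snd (fst l'))%Z, (snd l - snd l')%Z).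

Definition orthonormal3 (n xi eta : vec3) : Prop :=
  dot3 n n = 1 /\ dot3 xi xi = 1 /\ dot3 eta eta = 1 /\
  dot3 n xi = 0 /\ dot3 n eta = 0 /\ dot3 xi eta = 0.

(* Lambda_m = { lambda in Z^3 : |lambda|^2 = m } as an explicit duplicate-free list
   (all coordinates satisfy |a| <= m). *)
Definition zbox (m : nat) : list Z :=
  map (fun k => (Z.of_nat k - Z.of_nat m)%Z) (seq 0 (2 * m + 1)).

Definition Lambda (m : nat) : list zvec3 :=
  filter (fun l : zvec3 =>
            Z.eqb (fst (fst l) * fst (fst l) + snd (fst l) * snd (fst l) + snd l * snd l)%Z
                  (Z.of_nat m))
         (list_prod (list_prod (zbox m) (zbox m)) (zbox m)).

Definition NN (m : nat) : nat := length (Lambda m).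

Definition admissible (m : nat) : Prop :=
  (0 < m)%nat /\ (m mod 8 <> 0)%nat /\ (m mod 8 <> 4)%nat /\ (m mod 8 <> 7)%nat.

Definition expi (t : R) : C := (cos t, sin t).

Definition csum {T : Type} (s : list T) (f : T -> C) : C :=
  fold_right (fun x acc => Cplus (f x) acc) (RtoC 0) s.

Definition sum3 (f : nat -> C) : C := Cplus (f 0%nat) (Cplus (f 1%nat) (f 2%nat)).

Definition ephase (l : zvec3) (x : vec3) : C := expi (2 * PI * dot3 (zvecR l) x).

(* r, D, H evaluated at the difference vector x = (u'-u) xi + (v'-v) eta *)
Definition rr (m : nat) (x : vec3) : C :=
  Cmult (RtoC (1 / INR (NN m))) (csum (Lambda m) (fun l => ephase l x)).

Definition DD (m : nat) (x : vec3) (i : nat) : C :=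
  Cmult ((0, 2 * PI / INR (NN m)) : C)
        (csum (Lambda m) (fun l => Cmult (ephase l x) (RtoC (comp3 (zvecR l) i)))).

Definition HH (m : nat) (x : vec3) (i j : nat) : C :=
  Cmult (RtoC (- (4 * PI ^ 2) / INR (NN m)))
        (csum (Lambda m) (fun l =>
           Cmult (ephase l x) (RtoC (comp3 (zvecR l) i * comp3 (zvecR l) j)))).

Definition Omega (n : vec3) (i j : nat) : R :=
  if Nat.eqb i j then (dot3 n n - comp3 n i ^ 2) else - (comp3 n i * comp3 n j).

Definition integrand (n : vec3) (m : nat) (x : vec3) : C :=
  Cplus (Cmult (rr m x) (rr m x))
   (Cplus
     (Cmult (RtoC (1 / INR m))
        (sum3 (fun i => sum3 (fun j =>
           Cmult (DD m x i) (Cmult (RtoC (Omega n i j)) (DD m x j))))))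
     (Cmult (RtoC (1 / INR m ^ 2))
        (sum3 (fun i => sum3 (fun j => sum3 (fun k => sum3 (fun l =>
           Cmult (HH m x i j) (Cmult (RtoC (Omega n j k))
             (Cmult (HH m x k l) (RtoC (Omega n l i))))))))))).

(* iint over Pi^2 w.r.t. surface measure: p = u xi + v eta, p' = u' xi + v' eta,
   surface measure = du dv since xi, eta orthonormal *)
Definition IntPi2 (n xi eta : vec3) (A B : R) (m : nat) : C :=
  RInt (V := C_R_CompleteNormedModule) (fun v => RInt (V := C_R_CompleteNormedModule) (fun u => RInt (V := C_R_CompleteNormedModule) (fun v' => RInt (V := C_R_CompleteNormedModule) (fun u' =>
     integrand n m (vadd3 (vscale3 (u' - u) xi) (vscale3 (v' - v) eta)))
   0 A) 0 B) 0 A) 0 B.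

Definition zvec3_eqb (l l' : zvec3) : bool :=
  (Z.eqb (fst (fst l)) (fst (fst l')) && Z.eqb (snd (fst l)) (snd (fst l')) && Z.eqb (snd l) (snd l'))%bool.

Definition GG (xi eta : vec3) (A B : R) (m : nat) : R :=
  fold_right Rplus 0
    (map (fun pr : zvec3 * zvec3 =>
            if zvec3_eqb (fst pr) (snd pr) then 0
            else Cmod (RInt (V := C_R_CompleteNormedModule) (fun v => RInt (V := C_R_CompleteNormedModule) (fun u =>
                   ephase (zsub3 (fst pr) (snd pr)) (vadd3 (vscale3 u xi) (vscale3 v eta)))
                   0 A) 0 B) ^ 2)
         (list_prod (Lambda m) (Lambda m))).

(* Main.v *)
Require Import Defs.
From Stdlib Require Import Reals Lra Lia List Permutation Morphisms Setoid.
From Coquelicot Require Import Coquelicot.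
Open Scope R_scope.

Notation CV := C_R_CompleteNormedModule.

Lemma is_RInt_C_split (f : R -> C) a b (l : C) :
  is_RInt (V:=CV) f a b l <->
  (is_RInt (fun t => fst (f t)) a b (fst l) /\ is_RInt (fun t => snd (f t)) a b (snd l)).
Proof.
  split.
  - intros H. split.
    + exact (is_RInt_fct_extend_fst (U:=R_NormedModule) (V:=R_NormedModule) f a b l H).
    + exact (is_RInt_fct_extend_snd (U:=R_NormedModule) (V:=R_NormedModule) f a b l H).
  - intros [H1 H2]. destruct l as [l1 l2].
    exact (is_RInt_fct_extend_pair (U:=R_NormedModule) (V:=R_NormedModule) f a b l1 l2 H1 H2).
Qed.

Lemma is_RInt_Cmult_l (K : C) (f : R -> C) a b l :
  is_RInt (V:=CV) f a b l -> is_RInt (V:=CV) (fun t => Cmult K (f t)) a b (Cmult K l).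
Proof.
  intros H. apply is_RInt_C_split in H. destruct H as [H1 H2].
  apply (proj2 (is_RInt_C_split _ _ _ _)). destruct K as [k1 k2]. destruct l as [l1 l2]. simpl in *.
  split.
  - apply (is_RInt_ext (fun t => minus (scal k1 (fst (f t))) (scal k2 (snd (f t))))).
    + intros; reflexivity.
    + replace (k1 * l1 - k2 * l2) with (minus (scal k1 l1) (scal k2 l2)).
      * apply (is_RInt_minus (V:=R_NormedModule) (fun t => scal k1 (fst (f t))) (fun t => (scal k2 (snd (f t)))));
        apply (is_RInt_scal (V:=R_NormedModule)); assumption.
      * reflexivity.
  - apply (is_RInt_ext (fun t => plus (scal k1 (snd (f t))) (scal k2 (fst (f t))))).
    + intros; reflexivity.
    + replace (k1 * l2 + k2 * l1) with (plus (scal k1 l2) (scal k2 l1)).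
      * apply (is_RInt_plus (V:=R_NormedModule) (fun t => scal k1 (snd (f t))) (fun t => (scal k2 (fst (f t)))));
        apply (is_RInt_scal (V:=R_NormedModule)); assumption.
      * reflexivity.
Qed.

Lemma RInt_Cmult_l (K : C) (f : R -> C) a b :
  ex_RInt (V:=CV) f a b ->
  RInt (V:=CV) (fun t => Cmult K (f t)) a b = Cmult K (RInt (V:=CV) f a b).
Proof.
  intros H. apply is_RInt_unique. apply is_RInt_Cmult_l. apply RInt_correct. exact H.
Qed.

Lemma ex_RInt_Cmult_l (K : C) (f : R -> C) a b :
  ex_RInt (V:=CV) f a b -> ex_RInt (V:=CV) (fun t => Cmult K (f t)) a b.
Proof.
  intros [l H]. exists (Cmult K l). apply is_RInt_Cmult_l. exact H.
Qed.

Lemma ex_RInt_expi (g : R) a b : ex_RInt (V:=CV) (fun t => expi (g * t)) a b.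
Proof.
  assert (H1 : ex_RInt (fun t => cos (g * t)) a b).
  { apply (ex_RInt_continuous (V:=R_CompleteNormedModule)). intros z _.
    exact (ex_derive_continuous (K:=R_AbsRing) (V:=R_NormedModule) (fun t => cos (g*t)) z ltac:(auto_derive; auto)). }
  assert (H2 : ex_RInt (fun t => sin (g * t)) a b).
  { apply (ex_RInt_continuous (V:=R_CompleteNormedModule)). intros z _.
    exact (ex_derive_continuous (K:=R_AbsRing) (V:=R_NormedModule) (fun t => sin (g*t)) z ltac:(auto_derive; auto)). }
  destruct H1 as [l1 H1]. destruct H2 as [l2 H2].
  exists (l1, l2). apply (proj2 (is_RInt_C_split _ _ _ _)). simpl. split; assumption.
Qed.

Definition II (g L : R) : C := RInt (V:=CV) (fun t => expi (g * t)) 0 L.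

Lemma II_opp_Cmod g L : Cmod (II (- g) L) = Cmod (II g L).
Proof.
  unfold II.
  destruct (ex_RInt_expi g 0 L) as [l H].
  rewrite (is_RInt_unique _ _ _ l H).
  assert (H' : is_RInt (V:=CV) (fun t => expi (- g * t)) 0 L (fst l, - snd l)).
  { apply is_RInt_C_split in H. destruct H as [H1 H2]. apply (proj2 (is_RInt_C_split _ _ _ _)). simpl. split.
    - apply (is_RInt_ext (fun t => fst (expi (g * t)))); [|exact H1].
      intros; unfold expi; simpl. replace (- g * x) with (- (g * x)) by ring. rewrite cos_neg; auto.
    - apply (is_RInt_ext (fun t => opp (snd (expi (g * t))))).
      + intros; unfold expi, opp; simpl. replace (- g * x) with (- (g * x)) by ring. rewrite sin_neg; auto.
      + apply (is_RInt_opp (V:=R_NormedModule) _ _ _ _ H2). }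
  rewrite (is_RInt_unique _ _ _ _ H'). destruct l. unfold Cmod; simpl. f_equal. ring.
Qed.

Lemma II_zero L : II 0 L = RtoC L.
Proof.
  unfold II. apply (is_RInt_unique (V:=CV)). apply (proj2 (is_RInt_C_split _ _ _ _)). simpl. split.
  - apply (is_RInt_ext (fun _ => 1)). intros; simpl. rewrite Rmult_0_l, cos_0; auto.
    pose proof (is_RInt_const (V:=R_NormedModule) 0 L 1) as Hc.
    change (scal (L - 0) 1) with ((L - 0) * 1) in Hc. replace ((L - 0) * 1) with L in Hc by ring. exact Hc.
  - apply (is_RInt_ext (fun _ => 0)). intros; simpl. rewrite Rmult_0_l, sin_0; auto.
    pose proof (is_RInt_const (V:=R_NormedModule) 0 L 0) as Hc.
    change (scal (L - 0) 0) with ((L - 0) * 0) in Hc. replace ((L - 0) * 0) with 0 in Hc by ring. exact Hc.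
Qed.

Lemma expi_add a b : Cmult (expi a) (expi b) = expi (a + b).
Proof.
  unfold expi. rewrite cos_plus, sin_plus. apply injective_projections; simpl; ring.
Qed.

Section Csum.
Context {T : Type}.

Lemma csum_ext (s : list T) f g : (forall l, f l = g l) -> csum s f = csum s g.
Proof. intros H; induction s; simpl; [reflexivity| rewrite H, IHs; reflexivity]. Qed.

Lemma csum_plus (s : list T) f g :
  Cplus (csum s f) (csum s g) = csum s (fun l => Cplus (f l) (g l)).
Proof. induction s; simpl. ring. rewrite <- IHs. ring. Qed.

Lemma csum_scal_l (s : list T) k f : Cmult k (csum s f) = csum s (fun l => Cmult k (f l)).
Proof. induction s; simpl. ring. rewrite <- IHs. ring. Qed.

Lemma csum_scal_r (s : list T) k f : Cmult (csum s f) k = csum s (fun l => Cmult (f l) k).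
Proof. induction s; simpl. ring. rewrite <- IHs. ring. Qed.

Lemma csum_prod (s t : list T) f g :
  Cmult (csum s f) (csum t g) = csum s (fun l => csum t (fun l' => Cmult (f l) (g l'))).
Proof. rewrite csum_scal_r. apply csum_ext. intros l. apply csum_scal_l. Qed.

Lemma sum3_csum (s : list T) (F : nat -> T -> C) :
  sum3 (fun i => csum s (F i)) = csum s (fun l => sum3 (fun i => F i l)).
Proof. unfold sum3. rewrite !csum_plus. reflexivity. Qed.

Lemma RInt_csum (s : list T) (G : T -> R -> C) a b :
  (forall l, ex_RInt (V:=CV) (G l) a b) ->
  ex_RInt (V:=CV) (fun t => csum s (fun l => G l t)) a b /\
  RInt (V:=CV) (fun t => csum s (fun l => G l t)) a b = csum s (fun l => RInt (V:=CV) (G l) a b).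
Proof.
  intros H. induction s as [|x s IH]; simpl.
  - assert (H0 : is_RInt (V:=CV) (fun _ => RtoC 0) a b (RtoC 0)).
    { apply (proj2 (is_RInt_C_split _ _ _ _)). simpl.
      pose proof (is_RInt_const (V:=R_NormedModule) a b 0) as Hc.
      change (scal (b - a) 0) with ((b - a) * 0) in Hc. replace ((b - a) * 0) with 0 in Hc by ring.
      split; exact Hc. }
    split. exists (RtoC 0). exact H0. apply (is_RInt_unique (V:=CV)). exact H0.
  - destruct IH as [IH1 IH2]. split.
    + apply (ex_RInt_plus (V:=CV) (G x) (fun t => csum s (fun l => G l t))); auto.
    + rewrite <- IH2. apply (RInt_plus (V:=CV) (G x) (fun t => csum s (fun l => G l t))); auto.
Qed.
End Csum.

Instance csum_proper {T} (s : list T) : Proper (pointwise_relation T eq ==> eq) (csum s).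
Proof. intros f g H. apply csum_ext. exact H. Qed.

Instance sum3_proper : Proper (pointwise_relation nat eq ==> eq) sum3.
Proof. intros f g H. unfold sum3. rewrite !H. reflexivity. Qed.

Instance RInt_proper : Proper (pointwise_relation R eq ==> eq ==> eq ==> eq) (RInt (V:=CV)).
Proof. intros f g H a a' <- b b' <-. apply RInt_ext. intros; apply H. Qed.

Lemma RInt_csum2_expi {T} (s : list T) (K : T -> T -> C) (g : T -> T -> R) a b :
  RInt (V:=CV) (fun t => csum s (fun l => csum s (fun l' => Cmult (K l l') (expi (g l l' * t))))) a b
  = csum s (fun l => csum s (fun l' => Cmult (K l l') (RInt (V:=CV) (fun t => expi (g l l' * t)) a b))).
Proof.
  assert (E1 : forall l l', ex_RInt (V:=CV) (fun t => Cmult (K l l') (expi (g l l' * t))) a b).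
  { intros. apply ex_RInt_Cmult_l. apply ex_RInt_expi. }
  assert (E2 : forall l, ex_RInt (V:=CV) (fun t => csum s (fun l' => Cmult (K l l') (expi (g l l' * t)))) a b).
  { intros l. exact (proj1 (RInt_csum s (fun l' t => Cmult (K l l') (expi (g l l' * t))) a b (E1 l))). }
  rewrite (proj2 (RInt_csum s (fun l t => csum s (fun l' => Cmult (K l l') (expi (g l l' * t)))) a b E2)).
  apply csum_ext. intros l.
  rewrite (proj2 (RInt_csum s (fun l' t => Cmult (K l l') (expi (g l l' * t))) a b (E1 l))).
  apply csum_ext. intros l'. apply RInt_Cmult_l. apply ex_RInt_expi.
Qed.

Lemma RInt4 {T} (s : list T) (c : T -> T -> C) (al be : T -> T -> R) A B :
  RInt (V:=CV) (fun v => RInt (V:=CV) (fun u => RInt (V:=CV) (fun v' => RInt (V:=CV) (fun u' =>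
    csum s (fun l => csum s (fun l' =>
      Cmult (c l l') (expi (al l l' * (u' - u) + be l l' * (v' - v))))))
    0 A) 0 B) 0 A) 0 B
  = csum s (fun l => csum s (fun l' => Cmult (c l l')
      (II (al l l') A * II (be l l') B * II (- al l l') A * II (- be l l') B)%C)).
Proof.
  assert (L1 : forall u v v', RInt (V:=CV) (fun u' =>
    csum s (fun l => csum s (fun l' =>
      Cmult (c l l') (expi (al l l' * (u' - u) + be l l' * (v' - v)))))) 0 A
    = csum s (fun l => csum s (fun l' => Cmult (c l l' * expi (- al l l' * u) * expi (- be l l' * v)
         * II (al l l') A) (expi (be l l' * v'))))).
  { intros u v v'.
    transitivity (RInt (V:=CV) (fun u' => csum s (fun l => csum s (fun l' =>
      Cmult (c l l' * expi (- al l l' * u) * expi (- be l l' * v) * expi (be l l' * v'))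
            (expi (al l l' * u'))))) 0 A).
    - apply RInt_ext. intros x _. apply csum_ext; intros l; apply csum_ext; intros l'.
      rewrite <- !Cmult_assoc, !expi_add. f_equal. f_equal. ring.
    - rewrite RInt_csum2_expi. apply csum_ext; intros l; apply csum_ext; intros l'.
      unfold II. ring. }
  assert (L2 : forall u v, RInt (V:=CV) (fun v' => RInt (V:=CV) (fun u' =>
    csum s (fun l => csum s (fun l' =>
      Cmult (c l l') (expi (al l l' * (u' - u) + be l l' * (v' - v)))))) 0 A) 0 B
    = csum s (fun l => csum s (fun l' => Cmult (c l l' * expi (- be l l' * v)
         * II (al l l') A * II (be l l') B) (expi (- al l l' * u))))).
  { intros u v. rewrite (RInt_ext _ _ _ _ (fun x _ => L1 u v x)).
    rewrite RInt_csum2_expi. apply csum_ext; intros l; apply csum_ext; intros l'.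
    unfold II. ring. }
  assert (L3 : forall v, RInt (V:=CV) (fun u => RInt (V:=CV) (fun v' => RInt (V:=CV) (fun u' =>
    csum s (fun l => csum s (fun l' =>
      Cmult (c l l') (expi (al l l' * (u' - u) + be l l' * (v' - v)))))) 0 A) 0 B) 0 A
    = csum s (fun l => csum s (fun l' => Cmult (c l l'
         * II (al l l') A * II (be l l') B * II (- al l l') A) (expi (- be l l' * v))))).
  { intros v. rewrite (RInt_ext _ _ _ _ (fun x _ => L2 x v)).
    rewrite RInt_csum2_expi. apply csum_ext; intros l; apply csum_ext; intros l'.
    unfold II. ring. }
  rewrite (RInt_ext _ _ _ _ (fun x _ => L3 x)).
  rewrite RInt_csum2_expi. apply csum_ext; intros l; apply csum_ext; intros l'.
  unfold II. ring.
Qed.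

Definition sum3R (f : nat -> R) : R := f 0%nat + (f 1%nat + f 2%nat).
Definition az (l : zvec3) (i : nat) : R := comp3 (zvecR l) i.
Definition NR (m : nat) : R := INR (NN m).
Definition P2 (n : vec3) (l l' : zvec3) : R :=
  sum3R (fun i => sum3R (fun j => az l i * Omega n i j * az l' j)).
Definition P3 (n : vec3) (l l' : zvec3) : R :=
  sum3R (fun i => sum3R (fun j => sum3R (fun k => sum3R (fun q =>
    az l i * az l j * Omega n j k * (az l' k * az l' q) * Omega n q i)))).
Definition cr (n : vec3) (m : nat) (l l' : zvec3) : R :=
  1 / NR m * (1 / NR m) - 1 / INR m * (2 * PI / NR m) ^ 2 * P2 n l l'
  + 1 / INR m ^ 2 * (4 * PI ^ 2 / NR m) ^ 2 * P3 n l l'.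

Lemma shape2 {T} (s : list T) k w f g :
  Cmult (Cmult k (csum s f)) (Cmult w (Cmult k (csum s g))) =
  csum s (fun l => csum s (fun l' => Cmult (Cmult k (f l)) (Cmult w (Cmult k (g l'))))).
Proof.
  rewrite (csum_scal_l s k g), (csum_scal_l s w), (csum_scal_l s k f), csum_prod. reflexivity.
Qed.

Lemma shape3 {T} (s : list T) k w z f g :
  Cmult (Cmult k (csum s f)) (Cmult w (Cmult (Cmult k (csum s g)) z)) =
  csum s (fun l => csum s (fun l' => Cmult (Cmult k (f l)) (Cmult w (Cmult (Cmult k (g l')) z)))).
Proof.
  rewrite (csum_scal_l s k g), (csum_scal_r s z), (csum_scal_l s w), (csum_scal_l s k f), csum_prod.
  reflexivity.
Qed.

Lemma leaf1 (k : R) (e e' : C) :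
  Cmult (Cmult (RtoC k) e) (Cmult (RtoC k) e') = Cmult (Cmult e e') (RtoC (k * k)).
Proof. destruct e, e'. apply injective_projections; simpl; ring. Qed.

Lemma leaf2 (k w a b : R) (e e' : C) :
  Cmult (Cmult ((0, k) : C) (Cmult e (RtoC a))) (Cmult (RtoC w) (Cmult ((0,k) : C) (Cmult e' (RtoC b))))
  = Cmult (Cmult e e') (RtoC (- (k * k) * (a * w * b))).
Proof. destruct e, e'. apply injective_projections; simpl; ring. Qed.

Lemma leaf3 (k w a b z : R) (e e' : C) :
  Cmult (Cmult (RtoC k) (Cmult e (RtoC a))) (Cmult (RtoC w) (Cmult (Cmult (RtoC k) (Cmult e' (RtoC b))) (RtoC z)))
  = Cmult (Cmult e e') (RtoC (k * k * (a * w * b * z))).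
Proof. destruct e, e'. apply injective_projections; simpl; ring. Qed.

Lemma expand (n : vec3) (m : nat) (x : vec3) :
  integrand n m x = csum (Lambda m) (fun l => csum (Lambda m) (fun l' =>
     Cmult (Cmult (ephase l x) (ephase l' x)) (RtoC (cr n m l l')))).
Proof.
  unfold integrand, rr, DD, HH. unfold sum3. cbv beta.
  rewrite !shape2, !shape3.
  rewrite (csum_scal_l _ (RtoC (1 / INR (NN m)))), csum_prod.
  rewrite !csum_plus. rewrite !csum_scal_l. rewrite !csum_plus.
  apply csum_ext. intros l. cbv beta.
  rewrite !csum_plus. rewrite !csum_scal_l. rewrite !csum_plus.
  apply csum_ext. intros l'. cbv beta.
  rewrite !leaf2, !leaf3, leaf1.
  unfold cr, P2, P3, sum3R, az, NR.
  generalize (Cmult (ephase l x) (ephase l' x)) as E. intros [e1 e2].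
  generalize (comp3 (zvecR l) 0) (comp3 (zvecR l) 1) (comp3 (zvecR l) 2)
    (comp3 (zvecR l') 0) (comp3 (zvecR l') 1) (comp3 (zvecR l') 2).
  generalize (Omega n 0 0) (Omega n 0 1) (Omega n 0 2) (Omega n 1 0) (Omega n 1 1) (Omega n 1 2)
    (Omega n 2 0) (Omega n 2 1) (Omega n 2 2).
  generalize (INR (NN m)) (INR m). intros.
  (apply injective_projections; simpl; unfold Rdiv; ring).
Qed.
Definition rsum {T} (s : list T) (f : T -> R) : R := fold_right (fun x acc => f x + acc) 0 s.

Lemma rsum_le {T} (s : list T) f g : (forall l, In l s -> f l <= g l) -> rsum s f <= rsum s g.
Proof.
  induction s as [|a s IH]; simpl; intros H. lra.
  apply Rplus_le_compat. apply H; auto. apply IH; intros; apply H; auto.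
Qed.

Lemma rsum_ext {T} (s : list T) f g : (forall l, In l s -> f l = g l) -> rsum s f = rsum s g.
Proof.
  induction s as [|a s IH]; simpl; intros H. lra.
  rewrite H by auto. rewrite IH; auto.
Qed.

Lemma rsum_scal {T} (s : list T) k f : rsum s (fun l => k * f l) = k * rsum s f.
Proof. induction s; simpl. ring. rewrite IHs. ring. Qed.

Lemma rsum_plus {T} (s : list T) f g : rsum s (fun l => f l + g l) = rsum s f + rsum s g.
Proof. induction s; simpl. ring. rewrite IHs. ring. Qed.

Lemma rsum_nonneg {T} (s : list T) f : (forall l, In l s -> 0 <= f l) -> 0 <= rsum s f.
Proof.
  induction s as [|a s IH]; simpl; intros H. lra.
  apply Rplus_le_le_0_compat. apply H; auto. apply IH; intros; apply H; auto.
Qed.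

Lemma rsum_const1 {T} (s : list T) : rsum s (fun _ => 1) = INR (length s).
Proof. induction s; simpl length. reflexivity. rewrite S_INR. simpl. rewrite IHs. ring. Qed.

Lemma rsum_perm {T} (s t : list T) f : Permutation s t -> rsum s f = rsum t f.
Proof. intros H; induction H; simpl; lra. Qed.

Lemma rsum_map {T U} (s : list T) (g : T -> U) f : rsum (map g s) f = rsum s (fun x => f (g x)).
Proof. induction s; simpl; auto. rewrite IHs; auto. Qed.

Lemma Cmod_csum {T} (s : list T) f : Cmod (csum s f) <= rsum s (fun l => Cmod (f l)).
Proof.
  induction s; simpl. rewrite Cmod_0. lra.
  eapply Rle_trans. apply Cmod_triangle. lra.
Qed.

Lemma fold_plus_shift (xs : list R) c : fold_right Rplus c xs = fold_right Rplus 0 xs + c.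
Proof. induction xs; simpl. ring. rewrite IHxs. ring. Qed.

Lemma fold_prod {T} (s t : list T) (h : T * T -> R) :
  fold_right Rplus 0 (map h (list_prod s t)) = rsum s (fun l => rsum t (fun l' => h (l, l'))).
Proof.
  induction s as [|a s IH]; simpl. reflexivity.
  rewrite map_app, fold_right_app, fold_plus_shift, IH. f_equal.
  rewrite map_map. clear IH. induction t; simpl; auto. rewrite IHt. reflexivity.
Qed.

Lemma NoDup_prod {A B} (s : list A) (t : list B) : NoDup s -> NoDup t -> NoDup (list_prod s t).
Proof.
  intros Hs Ht. induction Hs as [|a s Ha Hs IH]; simpl. constructor.
  apply NoDup_app.
  - apply FinFun.Injective_map_NoDup; auto. intros x y E. inversion E; auto.
  - exact IH.
  - intros [x y] H1 H2. apply in_map_iff in H1. destruct H1 as [z [E _]]. inversion E; subst.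
    apply in_prod_iff in H2. tauto.
Qed.

Lemma zbox_In m z : In z (zbox m) <-> (- Z.of_nat m <= z <= Z.of_nat m)%Z.
Proof.
  unfold zbox. rewrite in_map_iff. split.
  - intros [k [E Hk]]. apply in_seq in Hk. lia.
  - intros H. exists (Z.to_nat (z + Z.of_nat m)). split. lia. apply in_seq. lia.
Qed.

Lemma zbox_NoDup m : NoDup (zbox m).
Proof.
  unfold zbox. apply FinFun.Injective_map_NoDup. intros x y E. lia. apply seq_NoDup.
Qed.

Lemma Lambda_NoDup m : NoDup (Lambda m).
Proof.
  unfold Lambda. apply NoDup_filter. apply NoDup_prod. apply NoDup_prod; apply zbox_NoDup. apply zbox_NoDup.
Qed.

Lemma Lambda_In m (l : zvec3) :
  In l (Lambda m) <->
  ((- Z.of_nat m <= fst (fst l) <= Z.of_nat m)%Z /\ (- Z.of_nat m <= snd (fst l) <= Z.of_nat m)%Z /\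
   (- Z.of_nat m <= snd l <= Z.of_nat m)%Z /\
   (fst (fst l) * fst (fst l) + snd (fst l) * snd (fst l) + snd l * snd l)%Z = Z.of_nat m).
Proof.
  destruct l as [[a b] c]. unfold Lambda. rewrite filter_In, Z.eqb_eq. simpl.
  pose proof (in_prod_iff (list_prod (zbox m) (zbox m)) (zbox m) (a, b) c) as H1.
  pose proof (in_prod_iff (zbox m) (zbox m) a b) as H2.
  rewrite !zbox_In in H1, H2. unfold zvec3. rewrite H1, H2, zbox_In. tauto.
Qed.

Definition zneg (l : zvec3) : zvec3 := ((- fst (fst l))%Z, (- snd (fst l))%Z, (- snd l)%Z).

Lemma Lambda_neg_perm m : Permutation (map zneg (Lambda m)) (Lambda m).
Proof.
  apply NoDup_Permutation.
  - apply FinFun.Injective_map_NoDup. intros [[a b] c] [[a' b'] c'] E. unfold zneg in E; simpl in E.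
    inversion E. f_equal; [f_equal|]; lia. apply Lambda_NoDup.
  - apply Lambda_NoDup.
  - intros x. rewrite in_map_iff. split.
    + intros [y [E Hy]]. subst x. apply Lambda_In in Hy. apply Lambda_In. destruct y as [[a b] c]. simpl in *. nia.
    + intros Hx. exists (zneg x). split. destruct x as [[a b] c]; unfold zneg; simpl; f_equal; [f_equal|]; lia.
      apply Lambda_In in Hx. apply Lambda_In. destruct x as [[a b] c]. simpl in *. nia.
Qed.

Definition indz (l mu : zvec3) : R := if zvec3_eqb l mu then 1 else 0.

Lemma zvec3_eqb_true l mu : zvec3_eqb l mu = true -> l = mu.
Proof.
  destruct l as [[a b] c], mu as [[a' b'] c']. unfold zvec3_eqb; simpl.
  intros H. apply andb_prop in H as [H H3]. apply andb_prop in H as [H1 H2].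
  apply Z.eqb_eq in H1, H2, H3. subst. reflexivity.
Qed.

Lemma ind_sum_le1 l (s : list zvec3) : NoDup s -> rsum s (fun mu => indz l mu) <= 1.
Proof.
  intros H. induction H as [|a s Ha Hs IH]; simpl. lra.
  unfold indz at 1. destruct (zvec3_eqb l a) eqn:E.
  - apply zvec3_eqb_true in E. subst a.
    assert (rsum s (fun mu => indz l mu) = 0).
    { clear IH Hs. induction s as [|b s IHs]; simpl. reflexivity.
      unfold indz at 1. destruct (zvec3_eqb l b) eqn:E.
      - apply zvec3_eqb_true in E. subst. exfalso. apply Ha. left; auto.
      - rewrite IHs. ring. intros Hin; apply Ha; right; auto. }
    lra.
  - lra.
Qed.

Definition dx (xi : vec3) (l : zvec3) : R := dot3 (zvecR l) xi.

Lemma ephase_x xi eta l s t :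
  ephase l (vadd3 (vscale3 s xi) (vscale3 t eta)) = expi (2 * PI * (s * dx xi l + t * dx eta l)).
Proof.
  unfold ephase, dx. f_equal. f_equal. unfold dot3, vadd3, vscale3, comp3; simpl. ring.
Qed.

Definition al (xi : vec3) (l l' : zvec3) : R := 2 * PI * (dx xi l + dx xi l').

Lemma integrand_pt n xi eta m u v u' v' :
  integrand n m (vadd3 (vscale3 (u' - u) xi) (vscale3 (v' - v) eta)) =
  csum (Lambda m) (fun l => csum (Lambda m) (fun l' =>
    Cmult (RtoC (cr n m l l')) (expi (al xi l l' * (u' - u) + al eta l l' * (v' - v))))).
Proof.
  rewrite expand. apply csum_ext; intros l; apply csum_ext; intros l'.
  rewrite !ephase_x, expi_add, Cmult_comm. f_equal. f_equal. unfold al. ring.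
Qed.

Lemma IntPi2_eq n xi eta A B m :
  IntPi2 n xi eta A B m =
  csum (Lambda m) (fun l => csum (Lambda m) (fun l' => Cmult (RtoC (cr n m l l'))
      (II (al xi l l') A * II (al eta l l') B * II (- al xi l l') A * II (- al eta l l') B)%C)).
Proof.
  unfold IntPi2.
  setoid_rewrite integrand_pt.
  exact (RInt4 (Lambda m) (fun l l' => RtoC (cr n m l l')) (al xi) (al eta) A B).
Qed.

Lemma dx_zsub xi l mu : dx xi (zsub3 l mu) = dx xi l - dx xi mu.
Proof.
  destruct l as [[a b] c], mu as [[a' b'] c']. unfold dx, dot3, zsub3, zvecR, comp3; simpl.
  rewrite !minus_IZR. ring.
Qed.

Lemma dx_zneg xi l : dx xi (zneg l) = - dx xi l.
Proof.
  destruct l as [[a b] c]. unfold dx, dot3, zneg, zvecR, comp3; simpl.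
  rewrite !opp_IZR. ring.
Qed.

Lemma GG_term xi eta A B z :
  RInt (V:=CV) (fun v => RInt (V:=CV) (fun u =>
     ephase z (vadd3 (vscale3 u xi) (vscale3 v eta))) 0 A) 0 B
  = Cmult (II (2 * PI * dx xi z) A) (II (2 * PI * dx eta z) B).
Proof.
  transitivity (RInt (V:=CV) (fun v => Cmult (II (2 * PI * dx xi z) A) (expi (2 * PI * dx eta z * v))) 0 B).
  - apply RInt_ext; intros v _.
    transitivity (RInt (V:=CV) (fun u => Cmult (expi (2 * PI * dx eta z * v)) (expi (2 * PI * dx xi z * u))) 0 A).
    + apply RInt_ext; intros u _. rewrite ephase_x, expi_add. f_equal. ring.
    + rewrite RInt_Cmult_l by apply ex_RInt_expi. unfold II. apply Cmult_comm.
  - rewrite RInt_Cmult_l by apply ex_RInt_expi. reflexivity.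
Qed.

Lemma comp3_sq_le1 (n : vec3) : dot3 n n = 1 -> forall i, comp3 n i ^ 2 <= 1.
Proof.
  intros H i. unfold dot3 in H.
  destruct i as [|[|[|i]]]; simpl comp3 in *; nra.
Qed.

Lemma Omega_bound n : dot3 n n = 1 -> forall i j, Rabs (Omega n i j) <= 1.
Proof.
  intros H i j. pose proof (comp3_sq_le1 n H i) as Hi. pose proof (comp3_sq_le1 n H j) as Hj.
  unfold Omega. destruct (Nat.eqb i j); try rewrite H; apply Rabs_le; split; nra.
Qed.

Lemma az_bound m l : In l (Lambda m) -> forall i, az l i ^ 2 <= INR m.
Proof.
  intros Hl i. apply Lambda_In in Hl. destruct Hl as [_ [_ [_ E]]].
  apply (f_equal IZR) in E. rewrite !plus_IZR, !mult_IZR, <- INR_IZR_INZ in E.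
  unfold az, zvecR. destruct i as [|[|[|i]]]; simpl comp3; nra.
Qed.

Lemma abs_prod_le x y M : x ^ 2 <= M -> y ^ 2 <= M -> Rabs x * Rabs y <= M.
Proof.
  intros Hx Hy. rewrite <- (pow2_abs x) in Hx. rewrite <- (pow2_abs y) in Hy.
  pose proof (Rabs_pos x). pose proof (Rabs_pos y). nra.
Qed.

Lemma sum3R_bound f M : (forall i, Rabs (f i) <= M) -> Rabs (sum3R f) <= 3 * M.
Proof.
  intros H. unfold sum3R. pose proof (H 0%nat). pose proof (H 1%nat). pose proof (H 2%nat).
  eapply Rle_trans. apply Rabs_triang. eapply Rle_trans.
  apply Rplus_le_compat_l. apply Rabs_triang. lra.
Qed.

Lemma P2_bound n m l l' : dot3 n n = 1 -> In l (Lambda m) -> In l' (Lambda m) ->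
  Rabs (P2 n l l') <= 3 * (3 * INR m).
Proof.
  intros Hn Hl Hl'. unfold P2. apply sum3R_bound; intros i. apply sum3R_bound; intros j.
  rewrite !Rabs_mult.
  pose proof (abs_prod_le (az l i) (az l' j) (INR m) (az_bound m l Hl i) (az_bound m l' Hl' j)).
  pose proof (Omega_bound n Hn i j). pose proof (Rabs_pos (az l i)). pose proof (Rabs_pos (az l' j)).
  pose proof (Rabs_pos (Omega n i j)).
  replace (Rabs (az l i) * Rabs (Omega n i j) * Rabs (az l' j)) with
    ((Rabs (az l i) * Rabs (az l' j)) * Rabs (Omega n i j)) by ring.
  assert (0 <= Rabs (az l i) * Rabs (az l' j)) by (apply Rmult_le_pos; auto).
  assert ((Rabs (az l i) * Rabs (az l' j)) * Rabs (Omega n i j) <= INR m * 1) by (apply Rmult_le_compat; auto).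
  lra.
Qed.

Lemma P3_bound n m l l' : dot3 n n = 1 -> In l (Lambda m) -> In l' (Lambda m) ->
  Rabs (P3 n l l') <= 3 * (3 * (3 * (3 * (INR m * INR m)))).
Proof.
  intros Hn Hl Hl'. unfold P3.
  apply sum3R_bound; intros i. apply sum3R_bound; intros j.
  apply sum3R_bound; intros k. apply sum3R_bound; intros q.
  rewrite !Rabs_mult.
  pose proof (abs_prod_le (az l i) (az l j) (INR m) (az_bound m l Hl i) (az_bound m l Hl j)) as H1.
  pose proof (abs_prod_le (az l' k) (az l' q) (INR m) (az_bound m l' Hl' k) (az_bound m l' Hl' q)) as H2.
  pose proof (Omega_bound n Hn j k) as H3. pose proof (Omega_bound n Hn q i) as H4.
  pose proof (Rabs_pos (Omega n j k)). pose proof (Rabs_pos (Omega n q i)).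
  assert (0 <= Rabs (az l i) * Rabs (az l j)) by (apply Rmult_le_pos; apply Rabs_pos).
  assert (0 <= Rabs (az l' k) * Rabs (az l' q)) by (apply Rmult_le_pos; apply Rabs_pos).
  set (X := Rabs (az l i) * Rabs (az l j)) in *. set (Y := Rabs (az l' k) * Rabs (az l' q)) in *.
  replace (Rabs (az l i) * Rabs (az l j) * Rabs (Omega n j k) * (Rabs (az l' k) * Rabs (az l' q)) *
      Rabs (Omega n q i)) with (X * Rabs (Omega n j k) * Y * Rabs (Omega n q i)) by (unfold X, Y; ring).
  assert (X * Rabs (Omega n j k) <= INR m * 1) by (apply Rmult_le_compat; auto).
  assert (X * Rabs (Omega n j k) * Y <= (INR m * 1) * INR m) by (apply Rmult_le_compat; auto; apply Rmult_le_pos; auto).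
  assert (X * Rabs (Omega n j k) * Y * Rabs (Omega n q i) <= (INR m * 1 * INR m) * 1).
  { apply Rmult_le_compat; auto. apply Rmult_le_pos; auto. apply Rmult_le_pos; auto. }
  lra.
Qed.

Definition C0 : R := 1 + 36 * PI ^ 2 + 1296 * PI ^ 4.

Lemma cr_bound n m l l' : dot3 n n = 1 -> (1 <= m)%nat -> In l (Lambda m) -> In l' (Lambda m) ->
  Rabs (cr n m l l') <= C0 / NR m ^ 2.
Proof.
  intros Hn Hm Hl Hl'.
  assert (HN : 0 < NR m).
  { unfold NR, NN. destruct (Lambda m). destruct Hl. simpl length. rewrite S_INR. pose proof (pos_INR (length l0)). lra. }
  assert (HM : 1 <= INR m) by (apply (le_INR 1 m) in Hm; simpl in Hm; lra).
  pose proof (P2_bound n m l l' Hn Hl Hl') as H2. pose proof (P3_bound n m l l' Hn Hl Hl') as H3.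
  set (p2 := P2 n l l') in *. set (p3 := P3 n l l') in *. set (N := NR m) in *. set (M := INR m) in *.
  assert (E : cr n m l l' = / N ^ 2 * (1 - 4 * PI ^ 2 * (p2 / M) + 16 * PI ^ 4 * (p3 / M ^ 2))).
  { unfold cr. fold p2 p3 N. fold M. field. lra. }
  rewrite E. rewrite Rabs_mult. rewrite Rabs_pos_eq by (apply Rlt_le, Rinv_0_lt_compat, pow_lt; lra).
  unfold C0. unfold Rdiv. rewrite (Rmult_comm (1 + _ + _)).
  apply Rmult_le_compat_l. apply Rlt_le, Rinv_0_lt_compat, pow_lt; lra.
  assert (A2 : Rabs (p2 / M) <= 9).
  { unfold Rdiv. rewrite Rabs_mult, Rabs_inv, (Rabs_pos_eq M) by lra.
    apply (Rmult_le_reg_r M); [lra|]. rewrite Rmult_assoc, Rinv_l by lra. lra. }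
  assert (A3 : Rabs (p3 / M ^ 2) <= 81).
  { unfold Rdiv. rewrite Rabs_mult, Rabs_inv, (Rabs_pos_eq (M ^ 2)) by (apply pow_le; lra).
    apply (Rmult_le_reg_r (M ^ 2)); [apply pow_lt; lra|]. rewrite Rmult_assoc, Rinv_l by (apply pow_nonzero; lra).
    simpl. lra. }
  assert (PP : 0 <= PI) by (pose proof PI_RGT_0; lra).
  assert (0 <= PI ^ 2) by (apply pow_le; lra). assert (0 <= PI ^ 4) by (apply pow_le; lra).
  eapply Rle_trans. apply Rabs_triang.
  eapply Rle_trans. apply Rplus_le_compat_r. apply Rabs_triang.
  rewrite Rabs_R1, Rabs_Ropp, !Rabs_mult, (Rabs_pos_eq 4), (Rabs_pos_eq 16), (Rabs_pos_eq (PI ^ 2)), (Rabs_pos_eq (PI ^ 4)) by lra.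
  assert (B2 : Rabs p2 * Rabs (/ M) <= 9) by (unfold Rdiv in A2; rewrite Rabs_mult in A2; exact A2).
  assert (B3 : Rabs p3 * Rabs (/ M ^ 2) <= 81) by (unfold Rdiv in A3; rewrite Rabs_mult in A3; exact A3).
  apply (Rmult_le_compat_l (4 * PI ^ 2)) in B2; [|lra].
  apply (Rmult_le_compat_l (16 * PI ^ 4)) in B3; [|lra].
  lra.
Qed.

Definition Qf (A B a b : R) : R := Cmod (Cmult (II a A) (II b B)) ^ 2.

Lemma Cmod_term c a b A B :
  Cmod (Cmult (RtoC c) (II a A * II b B * II (- a) A * II (- b) B)%C) = Rabs c * Qf A B a b.
Proof. rewrite !Cmod_mult, Cmod_R, !II_opp_Cmod. unfold Qf. rewrite Cmod_mult. ring. Qed.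

Lemma GG_nonneg xi eta A B m : 0 <= GG xi eta A B m.
Proof.
  unfold GG. rewrite fold_prod. apply rsum_nonneg; intros l _. apply rsum_nonneg; intros mu _.
  cbn [fst snd]. destruct (zvec3_eqb l mu). lra. apply pow2_ge_0.
Qed.

Lemma inner_sum xi eta A B m l :
  rsum (Lambda m) (fun l' => Qf A B (al xi l l') (al eta l l')) =
  rsum (Lambda m) (fun mu => Qf A B (2 * PI * dx xi (zsub3 l mu)) (2 * PI * dx eta (zsub3 l mu))).
Proof.
  rewrite <- (rsum_perm (map zneg (Lambda m)) (Lambda m)
    (fun mu => Qf A B (2 * PI * dx xi (zsub3 l mu)) (2 * PI * dx eta (zsub3 l mu))) (Lambda_neg_perm m)).
  rewrite rsum_map. apply rsum_ext; intros mu _.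
  rewrite !dx_zsub, !dx_zneg. unfold al. f_equal; ring.
Qed.

Lemma Qp_split xi eta A B l mu : 0 < A -> 0 < B ->
  Qf A B (2 * PI * dx xi (zsub3 l mu)) (2 * PI * dx eta (zsub3 l mu)) =
  (if zvec3_eqb l mu then 0 else
     Cmod (RInt (V:=CV) (fun v => RInt (V:=CV) (fun u =>
       ephase (zsub3 l mu) (vadd3 (vscale3 u xi) (vscale3 v eta))) 0 A) 0 B) ^ 2)
  + (A * B) ^ 2 * indz l mu.
Proof.
  intros HA HB. unfold indz. destruct (zvec3_eqb l mu) eqn:E.
  - apply zvec3_eqb_true in E. subst mu. rewrite !dx_zsub. unfold Qf. rewrite !Rminus_diag, !Rmult_0_r, !II_zero.
    rewrite Cmod_mult, !Cmod_R, !Rabs_pos_eq by lra. ring.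
  - rewrite GG_term. unfold Qf. ring.
Qed.

Lemma main_bound n xi eta A B m : dot3 n n = 1 -> (1 <= m)%nat -> 0 < A -> 0 < B ->
  Cmod (IntPi2 n xi eta A B m) <= C0 / NR m ^ 2 * (GG xi eta A B m + (A * B) ^ 2 * NR m).
Proof.
  intros Hn Hm HA HB.
  rewrite IntPi2_eq.
  eapply Rle_trans. apply Cmod_csum.
  eapply Rle_trans. apply rsum_le. intros l Hl. apply Cmod_csum.
  eapply Rle_trans. apply rsum_le. intros l Hl. apply rsum_le. intros l' Hl'.
  rewrite Cmod_term. apply Rmult_le_compat_r. apply pow2_ge_0. apply (cr_bound n m l l' Hn Hm Hl Hl').
  rewrite (rsum_ext _ _ (fun l => C0 / NR m ^ 2 * rsum (Lambda m) (fun l' => Qf A B (al xi l l') (al eta l l'))))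
    by (intros; apply rsum_scal).
  rewrite rsum_scal.
  assert (HC : 0 <= C0 / NR m ^ 2).
  { unfold C0, Rdiv. apply Rmult_le_pos. pose proof PI_RGT_0.
    assert (0 <= PI ^ 2) by (apply pow_le; lra). assert (0 <= PI ^ 4) by (apply pow_le; lra). lra.
    destruct (Req_dec (NR m ^ 2) 0) as [Z|Z]. rewrite Z, Rinv_0; lra.
    apply Rlt_le, Rinv_0_lt_compat. pose proof (pow2_ge_0 (NR m)). lra. }
  apply Rmult_le_compat_l. exact HC.
  rewrite (rsum_ext _ _ _ (fun l _ => inner_sum xi eta A B m l)).
  rewrite (rsum_ext _ _ _ (fun l _ => rsum_ext _ _ _ (fun mu _ => Qp_split xi eta A B l mu HA HB))).
  unfold GG. rewrite fold_prod.
  rewrite (rsum_ext _ _ _ (fun l _ => rsum_plus _ _ _)). rewrite rsum_plus.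
  apply Rplus_le_compat_l.
  rewrite (rsum_ext _ _ _ (fun l _ => rsum_scal _ _ _)). rewrite rsum_scal.
  apply Rmult_le_compat_l. apply pow2_ge_0.
  unfold NR, NN. rewrite <- rsum_const1. apply rsum_le. intros l _. apply ind_sum_le1. apply Lambda_NoDup.
Qed.

Theorem lemma4p1 (n xi eta : vec3) (A B : R) :
  orthonormal3 n xi eta -> 0 < A -> 0 < B ->
  exists (K : R) (M0 : nat), 0 < K /\
    forall m : nat, (M0 <= m)%nat -> admissible m ->
      Cmod (IntPi2 n xi eta A B m)
        <= K * (1 / INR (NN m) + GG xi eta A B m / INR (NN m) ^ 2).
Proof.
  intros Hon HA HB. destruct Hon as [Hn _].
  assert (HC0 : 0 < C0).
  { unfold C0. pose proof PI_RGT_0.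
    assert (0 <= PI ^ 2) by (apply pow_le; lra). assert (0 <= PI ^ 4) by (apply pow_le; lra). lra. }
  exists (C0 * (1 + (A * B) ^ 2)), 1%nat. split.
  { pose proof (pow2_ge_0 (A * B)). nra. }
  intros m Hm _.
  pose proof (GG_nonneg xi eta A B m) as HG.
  pose proof (pow2_ge_0 (A * B)) as HAB.
  destruct (Lambda m) as [|l0 s] eqn:EL.
  - rewrite IntPi2_eq, EL. simpl csum. rewrite Cmod_0.
    unfold NN. rewrite EL. simpl length. simpl INR.
    replace (0 ^ 2) with 0 by ring. unfold Rdiv. rewrite Rinv_0. nra.
  - pose proof (main_bound n xi eta A B m Hn Hm HA HB) as H.
    assert (HN : 0 < NR m).
    { unfold NR, NN. rewrite EL. simpl length. rewrite S_INR. pose proof (pos_INR (length s)). lra. }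
    eapply Rle_trans. exact H. fold (NR m).
    assert (E : C0 / NR m ^ 2 * (GG xi eta A B m + (A * B) ^ 2 * NR m) =
                C0 * (A * B) ^ 2 * (1 / NR m) + C0 * (GG xi eta A B m / NR m ^ 2)).
    { field. lra. }
    rewrite E.
    assert (0 < 1 / NR m) by (unfold Rdiv; rewrite Rmult_1_l; apply Rinv_0_lt_compat; lra).
    assert (0 <= GG xi eta A B m / NR m ^ 2).
    { unfold Rdiv. apply Rmult_le_pos. lra. apply Rlt_le, Rinv_0_lt_compat, pow_lt. lra. }
    set (x := 1 / NR m) in *. set (y := GG xi eta A B m / NR m ^ 2) in *. set (q := (A * B) ^ 2) in *.
    assert (0 <= C0 * x) by nra. assert (0 <= q * y) by nra. assert (0 <= C0 * (q * y)) by nra.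
    replace (C0 * (1 + q) * (x + y)) with (C0 * q * x + C0 * y + (C0 * x + C0 * (q * y))) by ring.
    lra.
Qed.
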